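(* Let $X=X(\Delta)$ be a smooth projective toric variety of dimension $n$ with rays $\rho_1,\dots,\rho_{n+r}$, and suppose there is a maximal cone $\sigma_0$ with $\sigma_0(1)=\{\rho_1,\dots,\rho_n\}$ such that every $\rho_{n+j}$ ($1\le j\le r$) is a combination of $\rho_1,\dots,\rho_n$ with non-positive coefficients. Write $\mathcal{P}_{n+j}:\rho_{n+j}+\sum_{i=1}^n\mathfrak{b}_{i,j}\rho_i=0$ ($1\le j\le r$). Then these are positive relations (all $\mathfrak{b}_{i,j}\in\mathbb{Z}_{\ge0}$). If $L=\mathcal{O}_X(D)$ with $D=\sum_{i=1}^{n+r}\mathfrak{a}_iD_{\rho_i}$ is globally generated, then $$\deg_L(\mathcal{P}_{n+j})=\mathfrak{a}_{n+j}+\sum_{i=1}^n\mathfrak{a}_i\mathfrak{b}_{i,j}\ge\beta,$$ where $\beta$ is the minimal $L$-degree of centred primitive relations.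
   Context: Rays are identified with primitive generators; $D_\rho$ is the torus-invariant divisor of $\rho$. A relation $\sum c_\rho\rho=0$ ($c_\rho\in\mathbb{Z}$, not all zero) is positive if all $c_\rho\ge0$. For $D=\sum a_\rho D_\rho$, $\phi_D$ equals $\langle m_D(\sigma),\cdot\rangle$ on each maximal cone $\sigma$, where $\langle m_D(\sigma),\rho\rangle=-a_\rho$ for $\rho\in\sigma(1)$; the $L$-degree of a relation $\sum c_\rho\rho=0$ is $-\sum c_\rho\phi_D(\rho)$. A primitive collection is a set of rays not generating a cone while every proper subset does; it is centred if its elements sum to $0$, giving the centred primitive relation $\sum_{\rho\in\mathcal{I}}\rho=0$. *)

(* Defs.v *)
From HB Require Import structures.
From mathcomp Require Import all_boot all_order all_algebra.
Set Implicit Arguments. Unset Strict Implicit. Unset Printing Implicit Defensive.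
Import Order.TTheory GRing.Theory Num.Theory.
Local Open Scope ring_scope.

Section Toric.
Variables (n m : nat) (ray : 'I_m -> 'rV[int]_n).

(* the pairing <u, v> between M = Z^n and N = Z^n *)
Definition pair (u v : 'rV[int]_n) : int := \sum_(k < n) u 0 k * v 0 k.

Definition inconeZ (S : {set 'I_m}) (v : 'rV[int]_n) : Prop :=
  exists c : 'I_m -> nat, (forall i, i \notin S -> c i = 0%N) /\
    v = \sum_(i in S) (c i)%:Z *: ray i.

Definition Zbasis (S : {set 'I_m}) : Prop :=
  forall v : 'rV[int]_n, exists! c : 'I_m -> int,
    (forall i, i \notin S -> c i = 0) /\ v = \sum_(i in S) c i *: ray i.

(* the maximal-cone data Max (sets of ray indices) define a smooth complete fan
   whose rays are exactly ray 0, ..., ray (m-1);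
   the cones of the fan are the cones generated by subsets of members of Max. *)
Definition smooth_complete_fan (Max : {set {set 'I_m}}) : Prop :=
  [/\ injective ray /\ (forall s, s \in Max -> #|s| = n),
      (forall s, s \in Max -> Zbasis s),
      (forall i, exists2 s, s \in Max & i \in s),
      (forall v, exists2 s, s \in Max & inconeZ s v) &
      (forall s t v, s \in Max -> t \in Max -> inconeZ s v -> inconeZ t v ->
          inconeZ (s :&: t) v)].

(* support-function data: m is m_D(s), i.e. <m, rho> = -a_rho for rho in s(1) *)
Definition is_mD (a : 'I_m -> int) (s : {set 'I_m}) (u : 'rV[int]_n) : Prop :=
  forall i, i \in s -> pair u (ray i) = - a i.

(* projective: there is a divisor with strictly convex support function (ample) *)
Definition projective_fan (Max : {set {set 'I_m}}) : Prop :=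
  exists a : 'I_m -> int, forall s, s \in Max -> exists u, is_mD a s u /\
    forall i, i \notin s -> - a i < pair u (ray i).

Definition smooth_projective_fan (Max : {set {set 'I_m}}) : Prop :=
  smooth_complete_fan Max /\ projective_fan Max.

(* O_X(D), D = sum a_i D_i, is globally generated (basepoint free):
   m_D(s) lies in P_D for every maximal cone s *)
Definition globally_generated (Max : {set {set 'I_m}}) (a : 'I_m -> int) : Prop :=
  forall s, s \in Max -> exists u, is_mD a s u /\
    forall i, - a i <= pair u (ray i).

Definition is_phiD (Max : {set {set 'I_m}}) (a : 'I_m -> int)
  (phi : 'rV[int]_n -> int) : Prop :=
  forall s, s \in Max -> exists u, is_mD a s u /\
    forall v, inconeZ s v -> phi v = pair u v.

Definition Ldeg (phi : 'rV[int]_n -> int) (c : 'I_m -> int) : int :=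
  - \sum_(i < m) c i * phi (ray i).

Definition is_relation (c : 'I_m -> int) : Prop :=
  (exists i, c i != 0) /\ \sum_(i < m) c i *: ray i = 0.

Definition is_cone (Max : {set {set 'I_m}}) (I : {set 'I_m}) : Prop :=
  exists2 s, s \in Max & I \subset s.

Definition primitive_collection (Max : {set {set 'I_m}}) (I : {set 'I_m}) : Prop :=
  ~ is_cone Max I /\ forall J : {set 'I_m}, J \proper I -> is_cone Max J.

Definition centred_primitive (Max : {set {set 'I_m}}) (I : {set 'I_m}) : Prop :=
  primitive_collection Max I /\ \sum_(i in I) ray i = 0.

(* coefficients of the centred primitive relation sum_{i in I} rho_i = 0 *)
Definition set_rel (I : {set 'I_m}) : 'I_m -> int := fun i => (i \in I)%:Z.

Definition is_min_centred_degree (Max : {set {set 'I_m}})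
  (phi : 'rV[int]_n -> int) (beta : int) : Prop :=
  (exists2 I, centred_primitive Max I & Ldeg phi (set_rel I) = beta) /\
  (forall I, centred_primitive Max I -> beta <= Ldeg phi (set_rel I)).

End Toric.

Definition ratv n (v : 'rV[int]_n) : 'rV[rat]_n := map_mx (fun x : int => x%:~R) v.

(* the relation P_{n+j} : rho_{n+j} + sum_i b_{i,j} rho_i = 0 *)
Definition Prel n r (b : 'I_n -> 'I_r -> int) (j : 'I_r) : 'I_(n + r) -> int :=
  fun k => match split k with inl i => b i j | inr j' => (j' == j)%:Z end.

(* Main.v *)
Require Import Defs.
From mathcomp Require Import all_boot all_order all_algebra.
From mathcomp Require Import zify.
Import Order.TTheory GRing.Theory Num.Theory.
Local Open Scope ring_scope.

Section Helpers.
Set Implicit Arguments.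

Lemma pairD n (u x y : 'rV[int]_n) : pair u (x + y) = pair u x + pair u y.
Proof. by rewrite /pair -big_split /=; apply: eq_bigr => k _; rewrite mxE mulrDr. Qed.
Lemma pair0 n (u : 'rV[int]_n) : pair u 0 = 0.
Proof. by rewrite /pair big1 // => k _; rewrite mxE mulr0. Qed.
Lemma pairZ n (u x : 'rV[int]_n) c : pair u (c *: x) = c * pair u x.
Proof. by rewrite /pair mulr_sumr; apply: eq_bigr => k _; rewrite mxE mulrCA. Qed.
Lemma pairN n (u x : 'rV[int]_n) : pair u (- x) = - pair u x.
Proof. by rewrite -scaleN1r pairZ mulN1r. Qed.
Lemma pair_sum n (u : 'rV[int]_n) (I : Type) (r : seq I) (P : pred I)
  (F : I -> 'rV[int]_n) :
  pair u (\sum_(i <- r | P i) F i) = \sum_(i <- r | P i) pair u (F i).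
Proof. exact: (big_morph (pair u) (pairD u) (pair0 u)). Qed.

Definition Lf n (u u' x : 'rV[int]_n) := pair u x - pair u' x.
Lemma LfD n (u u' x y : 'rV[int]_n) : Lf u u' (x + y) = Lf u u' x + Lf u u' y.
Proof. by rewrite /Lf !pairD opprD addrACA. Qed.
Lemma LfZ n (u u' x : 'rV[int]_n) c : Lf u u' (c *: x) = c * Lf u u' x.
Proof. by rewrite /Lf !pairZ mulrBr. Qed.
Lemma LfN n (u u' x : 'rV[int]_n) : Lf u u' (- x) = - Lf u u' x.
Proof. by rewrite /Lf !pairN opprB opprK addrC. Qed.
Lemma Lf0 n (u u' : 'rV[int]_n) : Lf u u' 0 = 0.
Proof. by rewrite /Lf !pair0 subrr. Qed.
Lemma Lf_sum n (u u' : 'rV[int]_n) (I : Type) (r : seq I) (P : pred I)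
  (F : I -> 'rV[int]_n) :
  Lf u u' (\sum_(i <- r | P i) F i) = \sum_(i <- r | P i) Lf u u' (F i).
Proof. exact: (big_morph (Lf u u') (LfD u u') (Lf0 u u')). Qed.

Lemma sum_in_full n m (ray : 'I_m -> 'rV[int]_n) (S : {set 'I_m}) (c : 'I_m -> int) :
  (forall i, i \notin S -> c i = 0) ->
  \sum_(i in S) c i *: ray i = \sum_i c i *: ray i.
Proof.
move=> H; rewrite [RHS](bigID (fun i => i \in S)) /= [X in _ + X]big1 ?addr0 //.
by move=> i /H ->; rewrite scale0r.
Qed.

Lemma zb_uniq n m (ray : 'I_m -> 'rV[int]_n) (S : {set 'I_m}) (c c' : 'I_m -> int) :
  Zbasis ray S -> (forall i, i \notin S -> c i = 0) ->
  (forall i, i \notin S -> c' i = 0) ->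
  \sum_i c i *: ray i = \sum_i c' i *: ray i -> c =1 c'.
Proof.
move=> HS Hc Hc' E.
have [c0 [_ U]] := HS (\sum_i c i *: ray i).
have e1 := U c (conj Hc (esym (sum_in_full ray S c Hc))).
have e2 := U c' (conj Hc' (etrans E (esym (sum_in_full ray S c' Hc')))).
by move=> i; rewrite -e1 -e2.
Qed.

Lemma slack n (w g : 'I_n -> int) :
  (forall l, 0 <= w l) -> (forall l, g l <= 0) ->
  \sum_l w l * g l <= 0 /\ (\sum_l w l * g l = 0 -> forall l, w l * g l = 0).
Proof.
move=> Hw Hg; split.
  by rewrite -oppr_ge0 -sumrN sumr_ge0 // => l _; rewrite -mulrN mulr_ge0 // oppr_ge0.
move=> H0 l; apply/eqP; rewrite -oppr_eq0; apply/eqP.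
apply: (@psumr_eq0P _ _ predT (fun l => - (w l * g l))) => //.
  by move=> k _; rewrite -mulrN mulr_ge0 // oppr_ge0.
by rewrite sumrN H0 oppr0.
Qed.

End Helpers.

Lemma chain3 (Q A S : int) : Q <= A + S -> A <= Q -> S <= 0 -> S = 0 /\ A = Q.
Proof.
move=> h1 h2 h3; have hS : S = 0.
  apply/eqP; rewrite eq_le h3 /=; rewrite -(lerD2l A) addr0; exact: le_trans h2 h1.
split=> //; apply/eqP; rewrite eq_le h2 /=; by rewrite -[A]addr0 -hS.
Qed.


Theorem mainTheorem9 (n r : nat) (ray : 'I_(n + r) -> 'rV[int]_n)
  (Max : {set {set 'I_(n + r)}})
  (Hfan : smooth_projective_fan ray Max)
  (Hs0 : [set i : 'I_(n + r) | (i < n)%N] \in Max)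
  (Hneg : forall j : 'I_r, exists c : 'I_n -> rat, (forall i, c i <= 0) /\
      ratv (ray (rshift n j)) = \sum_(i < n) c i *: ratv (ray (lshift r i)))
  (b : 'I_n -> 'I_r -> int)
  (Hb : forall j : 'I_r, ray (rshift n j) + \sum_(i < n) b i j *: ray (lshift r i) = 0)
  (a : 'I_(n + r) -> int)
  (Hgg : globally_generated ray Max a)
  (phi : 'rV[int]_n -> int) (Hphi : is_phiD ray Max a phi)
  (beta : int) (Hbeta : is_min_centred_degree ray Max phi beta) :
  (forall i j, 0 <= b i j) /\
  (forall j : 'I_r,
     Ldeg ray phi (Prel b j) = a (rshift n j) + \sum_(i < n) a (lshift r i) * b i j /\
     beta <= Ldeg ray phi (Prel b j)).
Proof.
case: Hfan => [[[Hinj Hcard] HZb Hin Hcomp Hint] [a2 Hamp]].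
set S0 := [set i : 'I_(n + r) | (i < n)%N] in Hs0 *.
pose e i := ray (lshift r i).
have S0l : forall i : 'I_n, lshift r i \in S0 by move=> i; rewrite inE /= ltn_ord.
have S0r : forall j : 'I_r, rshift n j \notin S0.
  by move=> j; rewrite inE /= ltnNge leq_addr.
have sumS0 : forall (F : 'I_(n+r) -> 'rV[int]_n),
    \sum_(i in S0) F i = \sum_(i < n) F (lshift r i).
  move=> F; rewrite big_mkcond big_split_ord /= [X in _ + X]big1 ?addr0.
    by apply: eq_bigr => i _; rewrite S0l.
  by move=> j _; rewrite (negbTE (S0r j)).
have Hbpos : forall i j, 0 <= b i j.
  have HC : forall k : 'I_n, exists c : 'I_n -> int,
      delta_mx 0 k = \sum_(i < n) c i *: e i.
    move=> k; have [c [[Hc Hv] _]] := HZb _ Hs0 (delta_mx 0 k).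
    by exists (fun i => c (lshift r i)); rewrite Hv sumS0.
  have [C HCk] := fin_all_exists HC.
  pose E : 'M[rat]_n := \matrix_(i, k) ((e i) 0 k)%:~R.
  pose Cm : 'M[rat]_n := \matrix_(k, i) (C k i)%:~R.
  have CE : Cm *m E = 1%:M.
    apply/matrixP => k k'; rewrite !mxE.
    have := congr1 (fun M : 'rV[int]_n => M 0 k') (HCk k).
    rewrite /= mxE summxE => H.
    have -> : ((k == k')%:R : rat) = (((0 == 0 :> 'I_1) && (k' == k))%:R : int)%:~R.
      by rewrite eq_sym; case: (k' == k).
    rewrite H rmorph_sum /=; apply: eq_bigr => i _; rewrite !mxE rmorphM /=.
    done.
  have EC := mulmx1C CE.
  move=> i j.
  have [c [Hc Hcv]] := Hneg j.
  pose x : 'rV[rat]_n := \row_i (c i + (b i j)%:~R).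
  have xE : x *m E = 0.
    apply/rowP => k'; rewrite !mxE.
    have := congr1 (fun M : 'rV[rat]_n => M 0 k') Hcv.
    rewrite /= mxE summxE => H1.
    have := congr1 (fun M : 'rV[int]_n => M 0 k') (Hb j).
    rewrite /= !mxE summxE => H2.
    rewrite (eq_bigr (fun l => c l * ((e l) 0 k')%:~R + (b l j)%:~R * ((e l) 0 k')%:~R));
      last by move=> l _; rewrite !mxE mulrDl.
    rewrite big_split /=.
    have -> : \sum_(l < n) c l * ((e l) 0 k')%:~R = (ray (rshift n j) 0 k')%:~R :> rat.
      by rewrite H1; apply: eq_bigr => l _; rewrite !mxE.
    have -> : \sum_(l < n) (b l j)%:~R * ((e l) 0 k')%:~R
        = ((\sum_(l < n) (b l j *: ray (lshift r l)) 0 k') : int)%:~R :> rat.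
      by rewrite rmorph_sum; apply: eq_bigr => l _; rewrite !mxE rmorphM.
    by rewrite -rmorphD /= H2.
  have x0 : x = 0 by rewrite -[x]mulmx1 -EC mulmxA xE mul0mx.
  have := congr1 (fun M : 'rV[rat]_n => M 0 i) x0.
  rewrite /= !mxE => /eqP; rewrite addr_eq0 => /eqP cb.
  by rewrite -(ler0z rat) -[X in _ <= X]opprK -cb oppr_ge0.
split=> //.
have Hphiray : forall k, phi (ray k) = - a k.
  move=> k; have [s Hs ks] := Hin k.
  have [u [Hu Hpu]] := Hphi s Hs.
  rewrite Hpu ?Hu //.
  exists (fun i => nat_of_bool (i == k)); split.
    by move=> i; case: eqP => // ->; rewrite ks.
  rewrite (bigD1 k) //= eqxx scale1r big1 ?addr0 // => i /andP[_ /negbTE ->].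
  by rewrite scale0r.
have Ldeg_eq : forall c, Ldeg ray phi c = \sum_i c i * a i.
  by move=> c; rewrite /Ldeg -sumrN; apply: eq_bigr => i _; rewrite Hphiray mulrN opprK.
have PrelL : forall i j, Prel b j (lshift r i) = b i j.
  by move=> i j; rewrite /Prel -[lshift r i]/(unsplit (inl i)) unsplitK.
have PrelR : forall j' j, Prel b j (rshift n j') = (j' == j)%:Z.
  by move=> j' j; rewrite /Prel -[rshift n j']/(unsplit (inr j')) unsplitK.
have sumPrel : forall j (F : 'I_(n + r) -> int),
    \sum_x Prel b j x * F x = F (rshift n j) + \sum_(i < n) b i j * F (lshift r i).
  move=> j F; rewrite big_split_ord /= addrC; congr (_ + _).
    rewrite (bigD1 j) //= PrelR eqxx mul1r big1 ?addr0 // => j' /negbTE Hj'.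
    by rewrite PrelR Hj' mul0r.
  by apply: eq_bigr => i _; rewrite PrelL.
move=> j; split.
  rewrite Ldeg_eq sumPrel; congr (_ + _); apply: eq_bigr => i _; exact: mulrC.
have [u0 [Hu0 Hu0le]] := Hgg S0 Hs0.
have [v0 [Hv0 Hv0lt]] := Hamp S0 Hs0.
pose p x := a x + pair u0 (ray x).
pose q x := a2 x + pair v0 (ray x).
have p0 : forall i : 'I_n, p (lshift r i) = 0.
  by move=> i; rewrite /p Hu0 ?S0l // addrN.
have q0 : forall i : 'I_n, q (lshift r i) = 0.
  by move=> i; rewrite /q Hv0 ?S0l // addrN.
have pge0 : forall x, 0 <= p x.
  move=> x; have := Hu0le x; rewrite /p; lia.
have qge0 : forall x, 0 <= q x.
  move=> x; rewrite /q; case: (boolP (x \in S0)) => xS.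
    by rewrite Hv0 // addrN.
  have := Hv0lt x xS; lia.
have degp : forall c, \sum_x c x * a x
    = \sum_x c x * p x - pair u0 (\sum_x c x *: ray x).
  move=> c; rewrite pair_sum -sumrB; apply: eq_bigr => x _.
  by rewrite pairZ /p mulrDr addrK.
have [j0 _ Hj0] : exists2 j0 : 'I_r, true & forall j', p (rshift n j0) <= p (rshift n j').
  case: (@arg_minP _ _ _ j predT (fun j' => p (rshift n j')) isT) => j0 _ H.
  by exists j0 => // j'; apply: H.
set mu := p (rshift n j0).
have [j1 Hj1mu Hj1] : exists2 j1 : 'I_r, p (rshift n j1) == mu &
    forall j', p (rshift n j') == mu -> q (rshift n j1) <= q (rshift n j').
  case: (@arg_minP _ _ _ j0 (fun j' => p (rshift n j') == mu)
     (fun j' => q (rshift n j')) (eqxx _)) => j1 H1 H.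
  by exists j1 => // j' Hj'; apply: H.
pose rho0 := rshift n j1.
have rep2 : forall u u' (i : 'I_n), Lf u u' (- e i) = Lf u u' (ray rho0)
    + \sum_l (b l j1 - (l == i)%:Z) * Lf u u' (e l).
  move=> u u' i.
  have H' : Lf u u' (ray rho0) + \sum_l b l j1 * Lf u u' (e l) = 0.
    have := congr1 (Lf u u') (Hb j1); rewrite LfD Lf_sum Lf0 => H.
    rewrite -[RHS]H; congr (_ + _).
    by apply: eq_bigr => l _; rewrite LfZ.
  rewrite LfN (eq_bigr (fun l => b l j1 * Lf u u' (e l) - (l == i)%:Z * Lf u u' (e l))).
    rewrite sumrB addrA H' sub0r (bigD1 i) //= eqxx mul1r big1 ?addr0 //.
    by move=> l /negbTE ->; rewrite mul0r.
  by move=> l _; rewrite mulrBl.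
have K : forall i : 'I_n, b i j1 != 0 -> b i j1 = 1 /\ exists2 t, t \in Max & rho0 \in t /\ (forall l, l != i -> b l j1 != 0 -> lshift r l \in t).
  move=> i bi0.
  have bi_gt0 : 0 < b i j1 by rewrite lt0r bi0 Hbpos.
  have [t Ht [d [Hd0 Hdv]]] := Hcomp (- e i).
  have [ut [Hut Hutle]] := Hgg t Ht.
  have [vt [Hvt Hvtlt]] := Hamp t Ht.
  have Hd0' : forall y, y \notin t -> (d y)%:Z = 0 by move=> y /Hd0 ->.
  have Hdv' : - e i = \sum_y (d y)%:Z *: ray y.
    by rewrite Hdv (sum_in_full ray t (fun y => (d y)%:Z) Hd0').
  have contra : forall T, Zbasis ray T -> lshift r i \in T ->
      (forall y, y \notin T -> (d y)%:Z = 0) -> False.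
    move=> T HT iT HdT.
    have Hc' : forall y, y \notin T -> - ((y == lshift r i)%:Z) = 0.
      by move=> y yT; case: eqP => [ey|_]; [by rewrite ey iT in yT | rewrite oppr0].
    have E : \sum_y (d y)%:Z *: ray y = \sum_y (- ((y == lshift r i)%:Z)) *: ray y.
      rewrite -Hdv' (bigD1 (lshift r i)) //= eqxx big1 ?addr0.
        by rewrite scaleN1r.
      by move=> y /negbTE ->; rewrite oppr0 scale0r.
    have := @zb_uniq _ _ ray T (fun y => (d y)%:Z) (fun y => - ((y == lshift r i)%:Z))
      HT HdT Hc' E (lshift r i).
    rewrite /= eqxx; lia.
  have Lple : forall y, Lf u0 ut (ray y) <= p y.
    move=> y; have := Hutle y; rewrite /Lf /p; lia.
  have Lpeq : forall y, y \in t -> Lf u0 ut (ray y) = p y.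
    by move=> y yt; rewrite /Lf /p Hut // opprK addrC.
  have Lqlt : forall y, y \notin t -> Lf v0 vt (ray y) < q y.
    move=> y yt; have := Hvtlt y yt; rewrite /Lf /q; lia.
  have Lqeq : forall y, y \in t -> Lf v0 vt (ray y) = q y.
    by move=> y yt; rewrite /Lf /q Hvt // opprK addrC.
  have Lqle : forall y, Lf v0 vt (ray y) <= q y.
    move=> y; case: (boolP (y \in t)) => yt; first by rewrite Lqeq.
    exact: ltW (Lqlt y yt).
  have Lp_e : Lf u0 ut (- e i) = \sum_y (d y)%:Z * p y.
    rewrite Hdv' Lf_sum; apply: eq_bigr => y _; rewrite LfZ.
    case: (boolP (y \in t)) => yt; first by rewrite Lpeq.
    by rewrite (Hd0 y yt) !mul0r.
  have Lq_e : Lf v0 vt (- e i) = \sum_y (d y)%:Z * q y.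
    rewrite Hdv' Lf_sum; apply: eq_bigr => y _; rewrite LfZ.
    case: (boolP (y \in t)) => yt; first by rewrite Lqeq.
    by rewrite (Hd0 y yt) !mul0r.
  have [x /and3P[xt dx xS]] : exists x, [&& x \in t, d x != 0%N & x \notin S0].
    case: (boolP [exists x, [&& x \in t, d x != 0%N & x \notin S0]]) => [/existsP //|].
    rewrite negb_exists => /forallP Hno; exfalso.
    apply: (contra S0 (HZb _ Hs0) (S0l i)) => y yS.
    case: (boolP (y \in t)) => yt; last by rewrite Hd0.
    by have := Hno y; rewrite yt yS andbT /= negbK => /eqP ->.
  have [j' xj'] : exists j', x = rshift n j'.
    case: (splitP x) => [l Hl|j'' Hj''].
      by move: xS; rewrite inE Hl ltn_ord.
    by exists j''; apply: val_inj; rewrite /= Hj''.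
  have Hw : forall l, 0 <= b l j1 - (l == i)%:Z.
    move=> l; case: eqP => [->|_] /=; have := Hbpos l j1; lia.
  have sum_ge : forall F : 'I_(n + r) -> int, (forall y, 0 <= F y) ->
      F x <= \sum_y (d y)%:Z * F y.
    move=> F HF; rewrite (bigD1 x) //=.
    have h1 : F x <= (d x)%:Z * F x by apply: ler_peMl => //; move: dx; lia.
    have h2 : 0 <= \sum_(y | y != x) (d y)%:Z * F y.
      by apply: sumr_ge0 => y _; apply: mulr_ge0.
    by apply: le_trans h1 _; rewrite lerDl.
  have Hgp : forall l, Lf u0 ut (e l) <= 0 by move=> l; rewrite -(p0 l); apply: Lple.
  have Hgq : forall l, Lf v0 vt (e l) <= 0 by move=> l; rewrite -(q0 l); apply: Lqle.
  have [slp _] := slack _ _ Hw Hgp.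
  have [slq slq0] := slack _ _ Hw Hgq.
  have pxmu : p x = mu.
    have h1 := rep2 u0 ut i. have h2 := sum_ge p pge0. have h3 := Lple rho0.
    have h4 : p rho0 = mu by apply/eqP.
    have h5 : mu <= p x by rewrite xj' Hj0.
    apply/eqP; rewrite eq_le h5 andbT; apply: (le_trans h2).
    rewrite -Lp_e h1 -h4; apply: le_trans (lerD h3 slp) _; by rewrite addr0.
  have qx : q rho0 <= q x by rewrite xj'; apply: Hj1; rewrite -xj' pxmu.
  have h1 := rep2 v0 vt i. have h2 := sum_ge q qge0. have h3 := Lqle rho0.
  have key : q rho0 <= Lf v0 vt (ray rho0)
      + \sum_l (b l j1 - (l == i)%:Z) * Lf v0 vt (e l).
    by rewrite -h1 Lq_e; apply: le_trans qx h2.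
  have [Hs0' HA] := chain3 _ _ _ key h3 slq.
  have Heach := slq0 Hs0'.
  have rt : rho0 \in t.
    by apply/negPn/negP => nt; have := Lqlt rho0 nt; rewrite HA ltxx.
  have inT : forall l, b l j1 - (l == i)%:Z != 0 -> lshift r l \in t.
    move=> l wl; apply/negPn/negP => nt; have := Lqlt _ nt.
    have := Heach l; move/eqP; rewrite mulf_eq0 (negbTE wl) /= => /eqP.
    by rewrite /e q0 => ->; rewrite ltxx.
  split.
    apply/eqP; apply/negPn/negP => bi1.
    apply: (contra t (HZb _ Ht) _ Hd0').
    by apply: inT; rewrite eqxx; lia.
  exists t => //; split => // l li bl.
  by apply: inT; rewrite (negbTE li) subr0.
have Hall01 : forall l, b l j1 = 0 \/ b l j1 = 1.
  move=> l; case: (eqVneq (b l j1) 0) => [->|/K [-> _]]; by [left|right].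
pose I := [set x : 'I_(n + r) |
  match split x with inl l => b l j1 != 0 | inr j' => j' == j1 end].
have IL : forall l, (lshift r l \in I) = (b l j1 != 0).
  by move=> l; rewrite inE -[lshift r l]/(unsplit (inl l)) unsplitK.
have IR : forall j', (rshift n j' \in I) = (j' == j1).
  by move=> j'; rewrite inE -[rshift n j']/(unsplit (inr j')) unsplitK.
have rhoI : rho0 \in I by rewrite IR.
have sumI : forall F : 'I_(n + r) -> int,
    \sum_x set_rel I x * F x = F rho0 + \sum_l b l j1 * F (lshift r l).
  move=> F; rewrite big_split_ord /= addrC; congr (_ + _).
    rewrite (bigD1 j1) //= /set_rel IR eqxx mul1r big1 ?addr0 // => j' /negbTE Hj'.
    by rewrite IR Hj' mul0r.
  apply: eq_bigr => l _; rewrite /set_rel IL.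
  by case: (Hall01 l) => ->; rewrite ?eqxx.
have sumIv : \sum_x set_rel I x *: ray x = 0.
  rewrite -[RHS](Hb j1) big_split_ord /= addrC; congr (_ + _).
    rewrite (bigD1 j1) //= /set_rel IR eqxx scale1r big1 ?addr0 // => j' /negbTE Hj'.
    by rewrite IR Hj' scale0r.
  apply: eq_bigr => l _; rewrite /set_rel IL.
  by case: (Hall01 l) => ->; rewrite ?eqxx.
have sumIin : \sum_(x in I) ray x = \sum_x set_rel I x *: ray x.
  rewrite big_mkcond; apply: eq_bigr => x _; rewrite /set_rel.
  by case: (x \in I); rewrite ?scale1r ?scale0r.
have HI : centred_primitive ray Max I.
  split; last by rewrite sumIin sumIv.
  split.
    case=> s Hs HIs.
    have Hc : forall y, y \notin s -> set_rel I y = 0.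
      move=> y ys; rewrite /set_rel; case yI: (y \in I) => //.
      by rewrite (subsetP HIs y yI) in ys.
    have E : \sum_x set_rel I x *: ray x = \sum_x (fun _ => 0 : int) x *: ray x.
      by rewrite sumIv big1 // => x _; rewrite scale0r.
    have := @zb_uniq _ _ ray s (set_rel I) (fun _ => 0) (HZb _ Hs) Hc (fun _ _ => erefl) E rho0.
    by rewrite /set_rel rhoI.
  move=> J /properP [HJI [x xI xJ]].
  have xE := splitK x.
  case: (split x) xE => [l|j'] /= xE.
    have bl : b l j1 != 0 by rewrite -IL xE.
    have [_ [t Ht [rt Hl]]] := K l bl.
    exists t => //; apply/subsetP => y yJ.
    have yI := subsetP HJI y yJ.
    have yE := splitK y.
    case: (split y) yE => [l'|j''] /= yE; move: yJ yI; rewrite -yE => yJ yI.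
      case: (eqVneq l' l) => [el|nl].
        by move: xJ; rewrite -xE -el yJ.
      by apply: Hl => //; rewrite -IL.
    by rewrite IR in yI; rewrite (eqP yI).
  exists S0 => //; apply/subsetP => y yJ.
  have yI := subsetP HJI y yJ.
  have yE := splitK y.
  case: (split y) yE => [l'|j''] /= yE; move: yJ yI; rewrite -yE => yJ yI.
    exact: S0l.
  move: xI; rewrite -xE IR => /eqP ej'.
  by move: yI; rewrite IR => /eqP ej''; move: xJ; rewrite -xE ej' -ej'' yJ.
have sumPrelv : \sum_x Prel b j x *: ray x = 0.
  rewrite -[RHS](Hb j) big_split_ord /= addrC; congr (_ + _).
    rewrite (bigD1 j) //= PrelR eqxx scale1r big1 ?addr0 // => j' /negbTE Hj'.
    by rewrite PrelR Hj' scale0r.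
  by apply: eq_bigr => i _; rewrite PrelL.
have degI : Ldeg ray phi (set_rel I) = mu.
  rewrite Ldeg_eq degp sumIv pair0 subr0 sumI big1 ?addr0.
    by apply/eqP.
  by move=> l _; rewrite p0 mulr0.
have degP : Ldeg ray phi (Prel b j) = p (rshift n j).
  rewrite Ldeg_eq degp sumPrelv pair0 subr0 sumPrel big1 ?addr0 //.
  by move=> l _; rewrite p0 mulr0.
rewrite degP; apply: le_trans (Hj0 j); rewrite -/mu -degI.
exact: (proj2 Hbeta) I HI.
Qed.
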